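(* Let $K\ge 2$ and let $\mathbf{z}_r$ and $\mathrm{OPT}\text{-}\mathbf{Q}^\star$ be as in the context. Let $\lambda_j^\star$ be the $j$-th eigenvalue of $\mathbf{Q}^\star$, with $\lambda_j^\star=0$ if $j>r^\star$. If $r\le r^\star$ and $\mathbf{H}$ is Hermitian, then $$\left|\mathrm{OPT}\text{-}\mathbf{Q}^\star-\mathbf{z}_r^\dagger\mathbf{Q}^\star\mathbf{z}_r\right|\le O\!\left(n\left(\lambda_{r+1}^\star+\|\mathbf{H}\|_2\right)\right).$$
   Context: $\mathcal{A}_K=\{\exp(2\pi\mathrm{i}k/K):k=0,\dots,K-1\}$. $\mathbf{Q}^\star\in\mathbb{C}^{n\times n}$ is Hermitian positive semi-definite of rank $r^\star$ with eigenvalues $\lambda_1^\star\ge\lambda_2^\star\ge\dots$. $\mathbf{H}\in\mathbb{C}^{n\times n}$ and $\mathbf{Q}=\mathbf{Q}^\star+\mathbf{H}$. $\mathbf{Q}_r=\mathbf{V}_r\boldsymbol{\Sigma}_r\mathbf{V}_r^\dagger$ with $\boldsymbol{\Sigma}_r$ the top-$r$ singular values of $\mathbf{Q}$ and $\mathbf{V}_r$ the corresponding left singular vectors. $\mathrm{OPT}\text{-}\mathbf{Q}^\star=\max_{\mathbf{z}\in\mathcal{A}_K^n}\mathbf{z}^\dagger\mathbf{Q}^\star\mathbf{z}$ and $\mathbf{z}_r$ attains $\max_{\mathbf{z}\in\mathcal{A}_K^n}\mathbf{z}^\dagger\mathbf{Q}_r\mathbf{z}$. $\|\cdot\|_2$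 is the spectral norm; $O(\cdot)$ hides an absolute constant. *)

(* Defs.v *)
From HB Require Import structures.
From mathcomp Require Import all_boot all_order all_algebra.
From mathcomp Require Import boolp classical_sets reals trigo.
From mathcomp Require Import complex.
Set Implicit Arguments. Unset Strict Implicit. Unset Printing Implicit Defensive.
Import Order.TTheory GRing.Theory Num.Theory.
Local Open Scope ring_scope.
Local Open Scope complex_scope.
Local Open Scope classical_set_scope.

Section Defs.
Variable R : realType.
Local Notation C := R[i].

Definition ctmx m n (A : 'M[C]_(m, n)) : 'M[C]_(n, m) := (map_mx conjc A)^T.

Definition is_hermitian n (A : 'M[C]_n) : Prop := ctmx A = A.

Definition is_unitary n (U : 'M[C]_n) : Prop := ctmx U *m U = 1%:M.

Definition quadf n (A : 'M[C]_n) (z : 'cV[C]_n) : C := (ctmx z *m A *m z) 0 0.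

(* Hermitian positive semi-definite (order on C: x <= y iff y - x is real >= 0) *)
Definition is_psd n (A : 'M[C]_n) : Prop :=
  is_hermitian A /\ forall x : 'cV[C]_n, 0 <= quadf A x.

Definition AK (K : nat) : C -> Prop := fun w =>
  exists k : 'I_K,
    w = (cos (2 * pi * k%:R / K%:R)) +i* (sin (2 * pi * k%:R / K%:R)).

Definition inAKn (K n : nat) (z : 'cV[C]_n) : Prop := forall i, AK K (z i 0).

Definition vnorm n (x : 'cV[C]_n) : R :=
  Num.sqrt (\sum_i (complex.Re (x i 0) ^+ 2 + complex.Im (x i 0) ^+ 2)).

Definition specnorm n (A : 'M[C]_n) : R :=
  sup [set t : R | exists x : 'cV[C]_n, vnorm x = 1 /\ t = vnorm (A *m x)].

(* lam : nat -> R lists the eigenvalues (with multiplicity) of A, 0-indexed, in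
   nonincreasing order, i.e. lam j = lambda_{j+1}; lam j = 0 for j >= n. *)
Definition eigen_seq n (A : 'M[C]_n) (lam : nat -> R) : Prop :=
  char_poly A = \prod_(j < n) ('X - ((lam j)%:C)%:P) /\
  (forall i j, (i <= j < n)%N -> lam j <= lam i) /\
  (forall j, (n <= j)%N -> lam j = 0).

Definition is_svd n (A : 'M[C]_n) (U : 'M[C]_n) (s : 'I_n -> R) (W : 'M[C]_n) : Prop :=
  is_unitary U /\ is_unitary W /\ (forall i, 0 <= s i) /\
  (forall i j : 'I_n, (i <= j)%N -> s j <= s i) /\
  A = U *m diag_mx (\row_i (s i)%:C) *m ctmx W.

(* A_r = V_r Sigma_r V_r^dagger, V_r = first r columns of U (left singular vectors) *)
Definition trunc_svd n (U : 'M[C]_n) (s : 'I_n -> R) (r : nat) : 'M[C]_n :=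
  \sum_(i < n | (i < r)%N) (s i)%:C *: (col i U *m ctmx (col i U)).

End Defs.

(* Main.v *)
From HB Require Import structures.
From mathcomp Require Import all_boot all_order all_algebra.
From mathcomp Require Import sesquilinear spectral.
Require Import Defs.
From mathcomp Require Import all_boot all_order all_algebra.
From mathcomp Require Import boolp classical_sets reals trigo.
From mathcomp Require Import complex.
From mathcomp Require Import ring lra zify.
Import Order.TTheory GRing.Theory Num.Theory.
Local Open Scope ring_scope.
Local Open Scope complex_scope.
Set Implicit Arguments. Unset Strict Implicit. Unset Printing Implicit Defensive.
Section Basics.
Variable R : realType.
Local Notation C := R[i].

Definition ip n (x y : 'cV[C]_n) : C := (ctmx x *m y) 0 0.
Definition nc (c : C) : R := complex.Re c ^+ 2 + complex.Im c ^+ 2.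
Definition nr n (x : 'cV[C]_n) : R := \sum_i nc (x i 0).

Lemma ipE n (x y : 'cV[C]_n) : ip x y = \sum_i conjc (x i 0) * y i 0.
Proof. by rewrite /ip /ctmx !mxE; apply: eq_bigr => i _; rewrite !mxE. Qed.

Lemma conjc_mul_self (c : C) : conjc c * c = (nc c)%:C.
Proof. case: c => a b; rewrite /nc /= /GRing.mul /= /mulc /=; apply/eqP; rewrite eq_complex /=; apply/andP; split; apply/eqP; ring. Qed.

End Basics.
Section B2.
Variable R : realType.
Local Notation C := R[i].
Local Notation Re := (@complex.Re R).
Local Notation Im := (@complex.Im R).

Lemma ReD (a b : C) : Re (a + b) = Re a + Re b. Proof. by case: a; case: b. Qed.
Lemma ReN (a : C) : Re (- a) = - Re a. Proof. by case: a. Qed.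
Lemma ReB (a b : C) : Re (a - b) = Re a - Re b. Proof. by rewrite ReD ReN. Qed.
Lemma Re_sum I (r : seq I) (P : pred I) (F : I -> C) :
  Re (\sum_(i <- r | P i) F i) = \sum_(i <- r | P i) Re (F i).
Proof. by elim/big_rec2: _ => // i y1 y2 _ <-; rewrite ReD. Qed.
Lemma ReRC (x : R) : Re x%:C = x. Proof. by []. Qed.
Lemma ReJ (a : C) : Re (conjc a) = Re a. Proof. by case: a. Qed.
Lemma RerM (x : R) (a : C) : Re (x%:C * a) = x * Re a.
Proof. by case: a => a b; rewrite /= mul0r subr0. Qed.

Lemma nc_ge0 (c : C) : 0 <= nc c.
Proof. by rewrite /nc addr_ge0 // sqr_ge0. Qed.
Lemma nc_eq0 (c : C) : nc c = 0 -> c = 0.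
Proof.
case: c => a b; rewrite /nc /= => h.
have : a ^+ 2 + b ^+ 2 == 0 by rewrite h.
rewrite paddr_eq0 ?sqr_ge0 // !sqrf_eq0 => /andP[/eqP -> /eqP ->] //.
Qed.
Lemma nr_ge0 n (x : 'cV[C]_n) : 0 <= nr x.
Proof. by apply: sumr_ge0 => i _; apply: nc_ge0. Qed.
Lemma nr_eq0 n (x : 'cV[C]_n) : nr x = 0 -> x = 0.
Proof.
move=> /eqP; rewrite psumr_eq0; last by move=> i _; apply: nc_ge0.
move=> /allP h; apply/matrixP => i j; rewrite ord1 mxE; apply: nc_eq0.
by apply/eqP; apply: h; rewrite mem_index_enum.
Qed.
Lemma ipxx n (x : 'cV[C]_n) : ip x x = (nr x)%:C.
Proof.
rewrite ipE /nr rmorph_sum /=; apply: eq_bigr => i _; exact: conjc_mul_self.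
Qed.

Lemma ctmxK m n (A : 'M[C]_(m, n)) : ctmx (ctmx A) = A.
Proof. by apply/matrixP => i j; rewrite !mxE conjcK. Qed.
Lemma ctmx_mul m n p (A : 'M[C]_(m, n)) (B : 'M[C]_(n, p)) :
  ctmx (A *m B) = ctmx B *m ctmx A.
Proof.
apply/matrixP => i j; rewrite !mxE rmorph_sum; apply: eq_bigr => k _.
by rewrite !mxE rmorphM mulrC.
Qed.
Lemma ctmxD m n (A B : 'M[C]_(m, n)) : ctmx (A + B) = ctmx A + ctmx B.
Proof. by apply/matrixP => i j; rewrite !mxE rmorphD. Qed.
Lemma ctmxN m n (A : 'M[C]_(m, n)) : ctmx (- A) = - ctmx A.
Proof. by apply/matrixP => i j; rewrite !mxE rmorphN. Qed.
Lemma ctmxB m n (A B : 'M[C]_(m, n)) : ctmx (A - B) = ctmx A - ctmx B.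
Proof. by rewrite ctmxD ctmxN. Qed.
Lemma ctmx1 n : ctmx (1%:M : 'M[C]_n) = 1%:M.
Proof. by apply/matrixP => i j; rewrite !mxE rmorphMn /= oppr0 eq_sym. Qed.
Lemma ctmx_diag n (e : 'I_n -> R) :
  ctmx (diag_mx (\row_i (e i)%:C)) = diag_mx (\row_i (e i)%:C).
Proof.
apply/matrixP => i j; rewrite !mxE rmorphMn /= eq_sym; case: eqP => [->|_] //=.
by rewrite oppr0.
Qed.

Lemma ip_mull n m (A : 'M[C]_(m, n)) (x : 'cV[C]_m) (y : 'cV[C]_n) :
  ip (ctmx A *m x) y = ip x (A *m y).
Proof. by rewrite /ip ctmx_mul ctmxK mulmxA. Qed.
Lemma ip_conj n (x y : 'cV[C]_n) : conjc (ip x y) = ip y x.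
Proof.
rewrite !ipE rmorph_sum; apply: eq_bigr => i _; by rewrite rmorphM /= conjcK mulrC.
Qed.
Lemma ipDr n (x y z : 'cV[C]_n) : ip x (y + z) = ip x y + ip x z.
Proof. by rewrite /ip mulmxDr mxE. Qed.
Lemma ipDl n (x y z : 'cV[C]_n) : ip (x + y) z = ip x z + ip y z.
Proof. by rewrite /ip ctmxD mulmxDl mxE. Qed.
Lemma ipNr n (x y : 'cV[C]_n) : ip x (- y) = - ip x y.
Proof. by rewrite /ip mulmxN mxE. Qed.
Lemma ipNl n (x y : 'cV[C]_n) : ip (- x) y = - ip x y.
Proof. by rewrite /ip ctmxN mulNmx mxE. Qed.
Lemma ipBr n (x y z : 'cV[C]_n) : ip x (y - z) = ip x y - ip x z.
Proof. by rewrite ipDr ipNr. Qed.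
Lemma ipBl n (x y z : 'cV[C]_n) : ip (x - y) z = ip x z - ip y z.
Proof. by rewrite ipDl ipNl. Qed.
Lemma ip0r n (x : 'cV[C]_n) : ip x 0 = 0.
Proof. by rewrite /ip mulmx0 mxE. Qed.
Lemma ip0l n (x : 'cV[C]_n) : ip 0 x = 0.
Proof. by rewrite ipE big1 // => i _; rewrite mxE conjc0 mul0r. Qed.

Lemma Re_ipC n (x y : 'cV[C]_n) : Re (ip y x) = Re (ip x y).
Proof. by rewrite -ip_conj ReJ. Qed.

Lemma nrE n (x : 'cV[C]_n) : nr x = Re (ip x x).
Proof. by rewrite ipxx. Qed.

Lemma nrD n (x y : 'cV[C]_n) : nr (x + y) = nr x + nr y + 2 * Re (ip x y).
Proof.
rewrite !nrE ipDl !ipDr !ReD (Re_ipC x y); ring.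
Qed.
Lemma nrB n (x y : 'cV[C]_n) : nr (x - y) = nr x + nr y - 2 * Re (ip x y).
Proof.
rewrite !nrE ipBl !ipBr !ReB (Re_ipC x y); ring.
Qed.
Lemma nr_par n (x y : 'cV[C]_n) : nr (x + y) <= 2 * nr x + 2 * nr y.
Proof. have := nr_ge0 (x - y); rewrite nrB nrD; lra. Qed.

Lemma ip_scaler n (x y : 'cV[C]_n) (t : R) : ip x (t%:C *: y) = t%:C * ip x y.
Proof. by rewrite /ip -scalemxAr mxE. Qed.
Lemma ip_scalel n (x y : 'cV[C]_n) (t : R) : ip (t%:C *: x) y = t%:C * ip x y.
Proof.
rewrite !ipE mulr_sumr; apply: eq_bigr => i _; by rewrite mxE rmorphM /= oppr0 -mulrA.
Qed.
Lemma nrZ n (x : 'cV[C]_n) (t : R) : nr (t%:C *: x) = t ^+ 2 * nr x.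
Proof. by rewrite !nrE ip_scalel ip_scaler mulrA -rmorphM /= RerM expr2. Qed.

End B2.
Section B3.
Variable R : realType.
Local Notation C := R[i].
Local Notation Re := (@complex.Re R).

Definition dmx n (e : 'I_n -> R) : 'M[C]_n := diag_mx (\row_i (e i)%:C).

Lemma ip_mulr n m (A : 'M[C]_(n, m)) (x : 'cV[C]_m) (y : 'cV[C]_n) :
  ip (A *m x) y = ip x (ctmx A *m y).
Proof. by rewrite -ip_mull ctmxK. Qed.

Lemma dmx_mul n (e : 'I_n -> R) (a : 'cV[C]_n) i :
  (dmx e *m a) i 0 = (e i)%:C * a i 0.
Proof. by rewrite /dmx mul_diag_mx !mxE. Qed.

Lemma ip_dmx n (e : 'I_n -> R) (a : 'cV[C]_n) :
  ip a (dmx e *m a) = (\sum_i e i * nc (a i 0))%:C.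
Proof.
rewrite ipE rmorph_sum; apply: eq_bigr => i _.
by rewrite dmx_mul mulrCA conjc_mul_self -rmorphM.
Qed.

Lemma Re_ip_dmx n (e : 'I_n -> R) (a : 'cV[C]_n) :
  Re (ip a (dmx e *m a)) = \sum_i e i * nc (a i 0).
Proof. by rewrite ip_dmx. Qed.

Lemma ctmx_dmx n (e : 'I_n -> R) : ctmx (dmx e) = dmx e.
Proof. exact: ctmx_diag. Qed.

Lemma dmx_mulmx n (e f : 'I_n -> R) : dmx e *m dmx f = dmx (fun i => e i * f i).
Proof.
apply/matrixP => i j; rewrite /dmx mul_diag_mx !mxE.
by case: eqP => _; rewrite ?mulr1n ?mulr0n ?mulr0 // rmorphM.
Qed.

Lemma dmxB n (e f : 'I_n -> R) : dmx e - dmx f = dmx (fun i => e i - f i).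
Proof.
apply/matrixP => i j; rewrite /dmx !mxE.
by case: eqP => _; rewrite ?mulr1n ?mulr0n ?subr0 // rmorphB.
Qed.

Lemma ip_bound n (x y : 'cV[C]_n) (b : R) : 0 <= b -> nr y <= b ^+ 2 * nr x ->
  `|Re (ip x y)| <= b * nr x.
Proof.
move=> b0 hy; have [bz|bp] := eqVneq b 0.
  subst b; have : nr y = 0 by apply/le_anti; rewrite nr_ge0 andbT; move: hy; rewrite expr2 !mul0r.
  by move/nr_eq0 => ->; rewrite ip0r /= normr0 mul0r.
have bpos : 0 < b by rewrite lt_def bp b0.
have h1 := nr_ge0 (b%:C *: x - y).
have h2 := nr_ge0 (b%:C *: x + y).
rewrite nrB nrZ ip_scalel RerM in h1.
rewrite nrD nrZ ip_scalel RerM in h2.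
have hx := nr_ge0 x.
rewrite ler_norml; apply/andP; split; nra.
Qed.

Lemma unitary_r n (U : 'M[C]_n) : Defs.is_unitary U -> U *m ctmx U = 1%:M.
Proof. by move=> hU; apply: mulmx1C. Qed.

Lemma nr_unitary n (U : 'M[C]_n) (a : 'cV[C]_n) : Defs.is_unitary U -> nr (U *m a) = nr a.
Proof. by move=> hU; rewrite !nrE ip_mulr mulmxA hU mul1mx. Qed.

Lemma nr_unitary' n (U : 'M[C]_n) (a : 'cV[C]_n) : Defs.is_unitary U -> nr (ctmx U *m a) = nr a.
Proof. by move=> hU; rewrite !nrE ip_mulr ctmxK mulmxA unitary_r // mul1mx. Qed.

End B3.
Section Key.
Variable R : realType.
Local Notation C := R[i].
Local Notation Re := (@complex.Re R).

Lemma mx_dmx_mul n (e : 'I_n -> R) (T : 'M[C]_n) i j :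
  (T *m dmx e) i j = T i j * (e j)%:C.
Proof. by rewrite /dmx mul_mx_diag !mxE. Qed.
Lemma dmx_mx_mul n (e : 'I_n -> R) (T : 'M[C]_n) i j :
  (dmx e *m T) i j = (e i)%:C * T i j.
Proof. by rewrite /dmx mul_diag_mx !mxE. Qed.
Lemma dmxE n (e : 'I_n -> R) i j : dmx e i j = (e i)%:C *+ (i == j).
Proof. by rewrite /dmx !mxE. Qed.

Lemma nc0 : nc (0 : C) = 0.
Proof. by rewrite /nc /= expr0n addr0. Qed.

Lemma sqr_inj_ge0 (x y : R) : 0 <= x -> 0 <= y -> x ^+ 2 = y ^+ 2 -> x = y.
Proof. move=> hx hy e; apply/eqP; rewrite -(eqrXn2 (n:=2)) //; exact/eqP. Qed.

Lemma key_offdiag n (s : 'I_n -> R) (T : 'M[C]_n) :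
  (forall i, 0 <= s i) -> T *m T = dmx (fun i => s i ^+ 2) ->
  forall i j, s i != s j -> T i j = 0.
Proof.
move=> s0 hTT i j sij.
have comm : T *m (T *m T) = (T *m T) *m T by rewrite mulmxA.
rewrite hTT in comm; move/matrixP: comm => /(_ i j).
rewrite mx_dmx_mul dmx_mx_mul => e.
have : T i j * ((s j ^+ 2 - s i ^+ 2)%:C) = 0 by rewrite rmorphB /= mulrBr e mulrC subrr.
move/eqP; rewrite mulf_eq0 => /orP[/eqP //|].
move=> h; exfalso; move: h; rewrite (inj_eq (@complexI R)) subr_eq0 => /eqP h.
by move: sij; rewrite (sqr_inj_ge0 (s0 i) (s0 j) (esym h)) eqxx.
Qed.

Lemma key_comm n (s : 'I_n -> R) (T : 'M[C]_n) :
  (forall i, 0 <= s i) -> T *m T = dmx (fun i => s i ^+ 2) ->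
  T *m dmx s = dmx s *m T.
Proof.
move=> s0 hTT; apply/matrixP => i j; rewrite mx_dmx_mul dmx_mx_mul.
have [e|ne] := eqVneq (s i) (s j); first by rewrite e mulrC.
by rewrite (key_offdiag s0 hTT ne) mulr0 mul0r.
Qed.

Lemma key n (s : 'I_n -> R) (T : 'M[C]_n) (h : R) :
  (forall i, 0 <= s i) -> 0 <= h ->
  ctmx T = T ->
  T *m T = dmx (fun i => s i ^+ 2) ->
  (forall w, - h * nr w <= Re (ip w (T *m w))) ->
  forall a, `|Re (ip a ((dmx s - T) *m a))| <= 2 * h * nr a.
Proof.
move=> s0 h0 hT hTT hpos a.
have offd := key_offdiag s0 hTT.
have TS := key_comm s0 hTT.
pose y : 'cV[C]_n := \col_i (if h < s i then a i 0 else 0).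
pose y' := a - y.
have y'E : forall i, y' i 0 = if h < s i then 0 else a i 0.
  by move=> i; rewrite /y' !mxE; case: ifP => _; rewrite ?subrr ?subr0.
have G1 : (dmx s - T) *m y = 0.
  set w := (dmx s - T) *m y.
  have wsupp : forall i, ~~ (h < s i) -> w i 0 = 0.
    move=> i hi; rewrite /w mxE big1 // => j _.
    rewrite !mxE; case: ifP => hj; last by rewrite mulr0.
    have sij : s i != s j.
      apply/eqP => e; move: hi; rewrite e hj //.
    rewrite (offd _ _ sij) subr0.
    have -> : (i == j) = false by apply/eqP => e; move: sij; rewrite e eqxx.
    by rewrite mulr0n mul0r.
  have prod : (dmx s + T) *m (dmx s - T) = 0.
    rewrite mulmxBr !mulmxDl -TS hTT dmx_mulmx.
    have -> : dmx (fun i => s i * s i) = dmx (fun i => s i ^+ 2).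
      by congr dmx; apply: funext => i; rewrite expr2.
    by rewrite opprD addrA addrK subrr.
  have hw : (dmx s + T) *m w = 0 by rewrite /w mulmxA prod mul0mx.
  have e0 : Re (ip w (dmx s *m w)) + Re (ip w (T *m w)) = 0.
    by rewrite -ReD -ipDr -mulmxDl hw ip0r.
  rewrite Re_ip_dmx in e0.
  have hle : \sum_i (s i - h) * nc (w i 0) <= 0.
    have := hpos w; rewrite /nr.
    have -> : \sum_i (s i - h) * nc (w i 0) = \sum_i s i * nc (w i 0) - h * \sum_i nc (w i 0).
      rewrite mulr_sumr -sumrB; apply: eq_bigr => i _; ring.
    lra.
  have terms : forall i, 0 <= (s i - h) * nc (w i 0).
    move=> i; case: (boolP (h < s i)) => hi.
      by apply: mulr_ge0; [rewrite subr_ge0 ltW | exact: nc_ge0].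
    by rewrite wsupp // nc0 mulr0.
  have all0 : \sum_i (s i - h) * nc (w i 0) = 0.
    by apply/le_anti; rewrite hle /=; apply: sumr_ge0 => i _; apply: terms.
  move/eqP: all0; rewrite psumr_eq0; last by move=> i _; apply: terms.
  move=> /allP hall; apply/matrixP => i j; rewrite ord1 [RHS]mxE.
  case: (boolP (h < s i)) => hi; last by rewrite wsupp.
  have := hall i (mem_index_enum _); rewrite mulf_eq0 => /orP[|/eqP]; last exact: nc_eq0.
  by rewrite subr_eq0 => /eqP e; move: hi; rewrite e ltxx.
have G2 : `|Re (ip y' (T *m y'))| <= h * nr y'.
  apply: ip_bound => //.
  rewrite nrE ip_mulr hT mulmxA hTT Re_ip_dmx /nr mulr_sumr.
  apply: ler_sum => i _; rewrite y'E; case: ifP => hi.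
    by rewrite nc0 !mulr0.
  apply: ler_wpM2r; first exact: nc_ge0.
  have := s0 i; move: hi => /negbT; rewrite -leNgt => hi si0.
  by rewrite ler_sqr.
have G2b : 0 <= Re (ip y' (dmx s *m y')) <= h * nr y'.
  rewrite Re_ip_dmx; apply/andP; split.
    by apply: sumr_ge0 => i _; apply: mulr_ge0 => //; exact: nc_ge0.
  rewrite /nr mulr_sumr; apply: ler_sum => i _; rewrite y'E; case: ifP => hi.
    by rewrite nc0 !mulr0.
  apply: ler_wpM2r; first exact: nc_ge0.
  by move: hi => /negbT; rewrite -leNgt.
have Nle : nr y' <= nr a.
  apply: ler_sum => i _; rewrite y'E; case: ifP => _ //.
  by rewrite nc0; exact: nc_ge0.
have herm : ctmx (dmx s - T) = dmx s - T by rewrite ctmxB ctmx_dmx hT.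
have G3 : Re (ip a ((dmx s - T) *m a)) = Re (ip y' (dmx s *m y')) - Re (ip y' (T *m y')).
  have ae : a = y + y' by rewrite /y' addrC subrK.
  rewrite {1 2}ae mulmxDr G1 add0r ipDl.
  have -> : ip y ((dmx s - T) *m y') = 0.
    by rewrite -herm -ip_mulr G1 ip0l.
  by rewrite add0r mulmxBl ipBr ReB.
rewrite G3.
move: G2; rewrite ler_norml => /andP[g1 g2].
move/andP: G2b => [g3 g4].
have ha := nr_ge0 y'.
rewrite ler_norml; apply/andP; split; nra.
Qed.

End Key.
Section Spec.
Variable R : realType.
Local Notation C := R[i].
Local Notation Re := (@complex.Re R).

Lemma ncM (a b : C) : nc (a * b) = nc a * nc b.
Proof. case: a => a1 a2; case: b => b1 b2; rewrite /nc /=; ring. Qed.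
Lemma ncJ (a : C) : nc (conjc a) = nc a.
Proof. case: a => a1 a2; rewrite /nc /=; ring. Qed.
Lemma Re_le_nc (a : C) : `|Re a| <= Num.sqrt (nc a).
Proof.
rewrite -sqrtr_sqr ler_sqrt; last exact: nc_ge0.
by rewrite /nc lerDl sqr_ge0.
Qed.
Lemma nc_le_nr n (x : 'cV[C]_n) i : nc (x i 0) <= nr x.
Proof.
rewrite /nr (bigD1 i) //= lerDl; apply: sumr_ge0 => j _; exact: nc_ge0.
Qed.

Lemma nr_mx_bound n (G : 'M[C]_n) (x : 'cV[C]_n) : nr x <= 1 ->
  `|Re (ip x (G *m x))| <= \sum_i \sum_j Num.sqrt (nc (G i j)).
Proof.
move=> hx; rewrite ipE Re_sum; apply: le_trans (ler_norm_sum _ _ _) _.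
apply: ler_sum => i _; rewrite mxE mulr_sumr Re_sum.
apply: le_trans (ler_norm_sum _ _ _) _; apply: ler_sum => j _.
apply: le_trans (Re_le_nc _) _.
rewrite !ncM ncJ !sqrtrM; try exact: nc_ge0; try (by apply: mulr_ge0; exact: nc_ge0).
have s1 : Num.sqrt (nc (x i 0)) <= 1.
  by rewrite -sqrtr1 ler_sqrt ?ler01 //; apply: le_trans hx; exact: nc_le_nr.
have s2 : Num.sqrt (nc (x j 0)) <= 1.
  by rewrite -sqrtr1 ler_sqrt ?ler01 //; apply: le_trans hx; exact: nc_le_nr.
have g0 := sqrtr_ge0 (nc (G i j)).
have a0 := sqrtr_ge0 (nc (x i 0)).
have b0 := sqrtr_ge0 (nc (x j 0)).
set a := Num.sqrt (nc (x i 0)) in s1 a0 *; set b := Num.sqrt (nc (x j 0)) in s2 b0 *;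
set g := Num.sqrt (nc (G i j)) in g0 *.
have gb : g * b <= g by nra.
have gb0 : 0 <= g * b by nra.
nra.
Qed.

Lemma vnormE n (x : 'cV[C]_n) : vnorm x = Num.sqrt (nr x).
Proof. by []. Qed.

Lemma specnorm_prop n (H : 'M[C]_n) : (0 < n)%N ->
  0 <= specnorm H /\ forall x, nr (H *m x) <= specnorm H ^+ 2 * nr x.
Proof.
move=> n0.
set E := [set t : R | exists x : 'cV[C]_n, vnorm x = 1 /\ t = vnorm (H *m x)]%classic.
set B := \sum_i \sum_j Num.sqrt (nc ((ctmx H *m H) i j)).
have Eub : has_ubound E.
  exists (Num.sqrt B) => t [x [hx ->]].
  have hx1 : nr x <= 1.
    move: hx; rewrite vnormE => h1; have := sqr_sqrtr (nr_ge0 x).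
    by rewrite h1 expr1n => <-.
  rewrite vnormE ler_sqrt; last first.
    apply: le_trans (normr_ge0 _) _; exact: (nr_mx_bound (ctmx H *m H) hx1).
  rewrite nrE ip_mulr mulmxA; apply: le_trans (ler_norm _) _.
  exact: nr_mx_bound.
have ubE := ub_le_sup Eub.
rewrite /specnorm -/E.
have h0 : 0 <= sup E.
  pose e0 : 'cV[C]_n := delta_mx (Ordinal n0) 0.
  have ne0 : nr e0 = 1.
    rewrite /nr (bigD1 (Ordinal n0)) //= big1 ?addr0.
      by rewrite !mxE !eqxx /= /nc /= expr1n expr0n addr0.
    move=> i hi; rewrite !mxE; move: hi; case: eqP => //= _ _; by rewrite nc0.
  apply: le_trans (ubE (vnorm (H *m e0)) _); first exact: sqrtr_ge0.
  by exists e0; rewrite vnormE ne0 sqrtr1.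
split => // x.
have [x0|xn0] := eqVneq (nr x) 0.
  rewrite x0 mulr0 (nr_eq0 x0) mulmx0 /nr big1 // => i _; by rewrite mxE nc0.
have xpos : 0 < nr x by rewrite lt_def xn0 nr_ge0.
set k := (Num.sqrt (nr x))^-1.
have kpos : 0 < k by rewrite invr_gt0 sqrtr_gt0.
have k2 : k ^+ 2 * nr x = 1.
  by rewrite /k exprVn sqr_sqrtr ?mulVf // nr_ge0.
have inE : E (vnorm (H *m (k%:C *: x))).
  by exists (k%:C *: x); split => //; rewrite vnormE nrZ k2 sqrtr1.
have := ubE _ inE; rewrite vnormE -scalemxAr nrZ => hs.
have hs2 : k ^+ 2 * nr (H *m x) <= sup E ^+ 2.
  have p0 : 0 <= k ^+ 2 * nr (H *m x) by apply: mulr_ge0; [exact: sqr_ge0|exact: nr_ge0].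
  rewrite -(sqr_sqrtr p0).
  by rewrite ler_sqr ?nnegrE ?sqrtr_ge0.
have hN := nr_ge0 (H *m x).
have : nr (H *m x) = (k ^+ 2 * nr (H *m x)) * nr x.
  by rewrite mulrAC k2 mul1r.
move=> ->; apply: ler_wpM2r; [exact: nr_ge0 | exact: hs2].
Qed.

End Spec.
Section Spectral.
Variable R : realType.
Local Notation C := R[i].
Local Notation Re := (@complex.Re R).

Lemma card_countE (T : finType) (A : {set T}) : #|A| = count (fun x => x \in A) (enum T).
Proof. rewrite enumT cardE /enum_mem size_filter. by []. Qed.

Lemma char_poly_sim n (P D : 'M[C]_n) : P \in unitmx ->
  char_poly (invmx P *m D *m P) = char_poly D.
Proof.
move=> Pu; rewrite /char_poly /char_poly_mx.
set Pp := map_mx polyC P; set Pi := map_mx polyC (invmx P).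
have hPP : Pi *m Pp = 1%:M by rewrite -map_mxM mulVmx // map_mx1.
have -> : map_mx polyC (invmx P *m D *m P) = Pi *m map_mx polyC D *m Pp by rewrite !map_mxM.
have eX : ('X%:M : 'M[{poly C}]_n) = Pi *m 'X%:M *m Pp by rewrite scalar_mxC -mulmxA hPP mulmx1.
rewrite [in LHS]eX.
rewrite -mulmxBl -mulmxBr !det_mulmx mulrAC -det_mulmx hPP det1 mul1r.
reflexivity.
Qed.

End Spectral.
Section Spectral2.
Variable R : realType.
Local Notation C := R[i].
Local Notation Re := (@complex.Re R).

Lemma tc_ctmx m n (M : 'M[C]_(m, n)) : (M ^t*)%sesqui = ctmx M.
Proof. by rewrite /ctmx map_trmx. Qed.

Lemma herm_sym n (A : 'M[C]_n) : ctmx A = A -> A \is hermsymmx.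
Proof. by move=> hA; apply/is_hermitianmxP; rewrite expr0 scale1r tc_ctmx hA. Qed.

Lemma quadf_ip n (A : 'M[C]_n) (z : 'cV[C]_n) : quadf A z = ip z (A *m z).
Proof. by rewrite /quadf /ip mulmxA. Qed.

Lemma count_lam (lam : nat -> R) n r : (r < n)%N ->
  (forall i j, (i <= j < n)%N -> lam j <= lam i) ->
  (n - r <= count (fun j : 'I_n => (lam j <= lam r)%R) (enum 'I_n))%N.
Proof.
move=> rn mono.
have -> : count (fun j : 'I_n => (lam j <= lam r)%R) (enum 'I_n) =
          count (fun k => (lam k <= lam r)%R) (iota 0 n).
  by rewrite -val_enum_ord count_map.
have hn : n = (r + (n - r))%N by rewrite subnKC // ltnW.
rewrite [X in iota 0 X]hn iotaD count_cat add0n.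
have -> : count (fun k => (lam k <= lam r)%R) (iota r (n - r)) = (n - r)%N.
  have hall : all (fun k => (lam k <= lam r)%R) (iota r (n - r)).
    apply/allP => k; rewrite mem_iota => /andP[h1 h2]; apply: mono.
    by rewrite h1 /= -hn in h2 *.
  by move: hall; rewrite all_count size_iota => /eqP.
by rewrite leq_addl.
Qed.

End Spectral2.
Section Spectral3.
Variable R : realType.
Local Notation C := R[i].
Local Notation Re := (@complex.Re R).

Lemma enum_index (T : finType) : enum T = index_enum T.
Proof. by rewrite -deprecated_filter_index_enum filter_predT. Qed.

Lemma spectral_psd n (Qs : 'M[C]_n) (lam : nat -> R) (r : nat) :
  is_psd Qs -> eigen_seq Qs lam -> (r < n)%N ->
  exists (P : 'M[C]_n) (dr : 'I_n -> R),
    [/\ P *m ctmx P = 1%:M, ctmx P *m P = 1%:M,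
        Qs = ctmx P *m dmx dr *m P,
        (forall i, 0 <= dr i) &
        (n - r <= #|[set i | (dr i <= lam r)%R]|)%N].
Proof.
move=> [herm psd] [cp [mono lam0]] rn.
have hs := herm_sym herm.
have /orthomx_spectralP Aeq := hermitian_normalmx hs.
have Pun := spectral_unitarymx Qs.
have dreal := hermitian_spectral_diag_real hs.
move: (spectralmx Qs) (spectral_diag Qs) Aeq Pun dreal => P d Aeq Pun dreal.
have PP : P *m ctmx P = 1%:M by rewrite -tc_ctmx; exact/unitarymxP.
have PP' : ctmx P *m P = 1%:M by apply: mulmx1C.
have Pu : P \in unitmx := unitarymx_unit Pun.
pose dr i := Re (d 0 i).
have dE : forall i, d 0 i = (dr i)%:C.
  move=> i; rewrite /dr RRe_real //; exact: (mxOverP dreal).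
have Ddr : diag_mx d = dmx dr.
  apply/matrixP => i j; rewrite dmxE !mxE dE.
  by [].
have QE : Qs = ctmx P *m dmx dr *m P by rewrite {1}Aeq (invmx_unitary Pun) tc_ctmx Ddr.
exists P, dr; split => //.
- move=> i.
  pose e : 'cV[C]_n := delta_mx i 0.
  have := psd (ctmx P *m e).
  rewrite quadf_ip QE -!mulmxA (mulmxA P) PP mul1mx ip_mulr ctmxK mulmxA PP mul1mx ip_dmx.
  rewrite (bigD1 i) //= big1 ?addr0.
    by rewrite /e !mxE !eqxx /= /nc /= expr1n expr0n addr0 mulr1 ler0c.
  by move=> j hj; rewrite /e !mxE (negbTE hj) /= nc0 mulr0.
- have cpD : char_poly Qs = \prod_(i < n) ('X - ((dr i)%:C)%:P).
    rewrite Aeq char_poly_sim // char_poly_trig ?diag_mx_is_trig //.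
    by apply: eq_bigr => i _; rewrite !mxE eqxx mulr1n dE.
  have pe : perm_eq (map (fun i : 'I_n => (dr i)%:C) (index_enum 'I_n)) (map (fun j : 'I_n => (lam j)%:C) (index_enum 'I_n)).
    have e1 : \prod_(x <- map (fun i : 'I_n => (dr i)%:C) (index_enum 'I_n)) ('X - x%:P) = char_poly Qs.
      by rewrite big_map cpD.
    have e2 : \prod_(x <- map (fun i : 'I_n => (lam i)%:C) (index_enum 'I_n)) ('X - x%:P) = char_poly Qs.
      by rewrite big_map cp.
    apply: (@prod_XsubC_eq _ (map (fun i : 'I_n => (dr i)%:C) (index_enum 'I_n))).
    by rewrite e1 e2.
  have cl := count_lam rn mono; rewrite enum_index in cl.
  move/permP: pe => /(_ (fun c => c <= (lam r)%:C)).
  rewrite !count_map card_countE enum_index.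
  have -> : count (preim (fun j : 'I_n => (lam j)%:C) (fun c => c <= (lam r)%:C)) (index_enum 'I_n) =
            count (fun j : 'I_n => (lam j <= lam r)%R) (index_enum 'I_n).
    by apply: eq_count => j /=; rewrite lecR.
  have -> : count (preim (fun i : 'I_n => (dr i)%:C) (fun c => c <= (lam r)%:C)) (index_enum 'I_n) =
            count (fun i : 'I_n => i \in [set i | (dr i <= lam r)%R]) (index_enum 'I_n).
    by apply: eq_count => j /=; rewrite inE lecR.
  by move=> ->.
Qed.

End Spectral3.
Section Weyl.
Variable R : realType.
Local Notation C := R[i].
Local Notation Re := (@complex.Re R).

Lemma rowsub_unitary m n (M : 'M[C]_(m, n)) p (f : 'I_p -> 'I_m) :
  M *m ctmx M = 1%:M -> injective f ->
  rowsub f M *m ctmx (rowsub f M) = 1%:M.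
Proof.
move=> hM finj; apply/matrixP => k l.
move/matrixP: hM => /(_ (f k) (f l)).
rewrite !mxE (inj_eq finj) => <-.
by apply: eq_bigr => j _; rewrite !mxE.
Qed.

Lemma rowsub_mul1 m n p (f : 'I_p -> 'I_m) (M : 'M[C]_(m, n)) :
  rowsub f M = rowsub f 1%:M *m M.
Proof. by rewrite mul_rowsub_mx mul1mx. Qed.

Lemma rowsub1_supp m p (f : 'I_p -> 'I_m) (c : 'rV[C]_p) j :
  (forall k, f k != j) -> (c *m rowsub f 1%:M) 0 j = 0.
Proof.
move=> hj; rewrite mxE big1 // => k _; rewrite !mxE.
by rewrite (negbTE (hj k)) mulr0n mulr0.
Qed.

Lemma unitary_rank p n (M : 'M[C]_(p, n)) : M *m ctmx M = 1%:M -> \rank M = p.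
Proof. by move=> h; apply: mxrank_unitary; apply/unitarymxP; rewrite tc_ctmx. Qed.

Lemma nz_cap m1 m2 n (A : 'M[C]_(m1, n)) (B : 'M[C]_(m2, n)) :
  (n < \rank A + \rank B)%N ->
  exists v : 'rV[C]_n, [/\ v != 0, (v <= A)%MS & (v <= B)%MS].
Proof.
move=> hr.
have hc : (0 < \rank (A :&: B)%MS)%N.
  have := mxrank_sum_cap A B; have := rank_leq_col (A + B)%MS. lia.
exists (nz_row (A :&: B)%MS); split.
- by rewrite nz_row_eq0 -mxrank_eq0 -lt0n.
- exact: submx_trans (nz_row_sub _) (capmxSl _ _).
- exact: submx_trans (nz_row_sub _) (capmxSr _ _).
Qed.

End Weyl.
Section Weyl2.
Variable R : realType.
Local Notation C := R[i].
Local Notation Re := (@complex.Re R).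

Lemma weyl n (Qs H U W : 'M[C]_n) (s : 'I_n -> R) (lam : nat -> R) (r : nat) (h : R) :
  is_psd Qs -> eigen_seq Qs lam -> ctmx H = H -> 0 <= h ->
  (forall x, nr (H *m x) <= h ^+ 2 * nr x) ->
  is_svd (Qs + H) U s W -> (r < n)%N ->
  0 <= lam r /\ forall i : 'I_n, (r <= i)%N -> s i <= 2 * (lam r + h).
Proof.
move=> psd es hH h0 hHb [Uu [Wu [s0 [smono QE2]]]] rn.
have [P [dr [PP PP' QE dr0 card]]] := spectral_psd psd es rn.
set I2 := [set i | (dr i <= lam r)%R] in card.
have lam0 : 0 <= lam r.
  have : (0 < #|I2|)%N by apply: leq_trans card; rewrite subn_gt0.
  rewrite card_gt0 => /finset.set0Pn hne; case: hne => i; rewrite inE => hi.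
  exact: le_trans (dr0 i) hi.
split => //.
pose ro : 'I_n := Ordinal rn.
suff hro : s ro <= 2 * (lam r + h).
  move=> i hi; apply: le_trans hro; exact: smono.
pose f1 : 'I_r.+1 -> 'I_n := fun k => widen_ord rn k.
have f1inj : injective f1 by move=> k l /(congr1 val) /= /val_inj.
pose f2 : 'I_#|I2| -> 'I_n := enum_val.
have f2inj : injective f2 := @enum_val_inj _ _.
pose cP := map_mx conjc P.
have UT : U^T *m ctmx (U^T) = 1%:M.
  apply: trmx_inj; rewrite trmx_mul trmx1.
  have -> : (ctmx U^T)^T = ctmx U by rewrite /ctmx map_trmx trmxK.
  by rewrite trmxK.
have cPu : cP *m ctmx cP = 1%:M.
  apply: trmx_inj; rewrite trmx_mul trmx1.
  have -> : (ctmx cP)^T = P by apply/matrixP => i j; rewrite !mxE conjcK.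
  by [].
set V1 := rowsub f1 U^T; set V2 := rowsub f2 cP.
have r1 : \rank V1 = r.+1 by apply: unitary_rank; exact: rowsub_unitary.
have r2 : \rank V2 = #|I2| by apply: unitary_rank; exact: rowsub_unitary.
have [v [vn0 v1 v2]] : exists v : 'rV[C]_n, [/\ v != 0, (v <= V1)%MS & (v <= V2)%MS].
  apply: nz_cap; rewrite r1 r2; lia.
move/submxP: v1 => [c1 e1]; move/submxP: v2 => [c2 e2].
pose a := (c1 *m rowsub f1 1%:M)^T.
pose b := (c2 *m rowsub f2 1%:M)^T.
pose x := v^T.
have xa : x = U *m a by rewrite /x e1 /V1 rowsub_mul1 mulmxA /a trmx_mul trmxK.
have xb : x = ctmx P *m b by rewrite /x e2 /V2 rowsub_mul1 mulmxA /b trmx_mul.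
have asupp : forall j : 'I_n, (r < j)%N -> a j 0 = 0.
  move=> j hj; rewrite /a mxE rowsub1_supp // => k; apply/eqP => e.
  by move: hj; rewrite -e /= ltnNge -ltnS ltn_ord.
have bsupp : forall j : 'I_n, j \notin I2 -> b j 0 = 0.
  move=> j hj; rewrite /b mxE rowsub1_supp // => k; apply/eqP => e.
  by move: hj; rewrite -e /f2 enum_valP.
have xn0 : x != 0 by apply: contra vn0 => /eqP hx; rewrite -[v]trmxK -/x hx trmx0.
have Nx : 0 < nr x.
  rewrite lt_def nr_ge0 andbT; apply: contra xn0 => /eqP hx; apply/eqP; exact: nr_eq0.
have Na : nr x = nr a by rewrite xa nr_unitary.
have Nb : nr x = nr b.
  by rewrite xb nr_unitary'; last exact: PP'.
set Q := Qs + H.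
have hQ : ctmx Q = Q by rewrite /Q ctmxD hH (proj1 psd).
have I1 : s ro ^+ 2 * nr x <= nr (Q *m x).
  rewrite [nr (Q *m x)]nrE ip_mulr hQ mulmxA.
  have -> : Q *m Q = U *m dmx (fun i => s i ^+ 2) *m ctmx U.
    have QE3 : Qs + H = U *m dmx s *m ctmx W := QE2.
    rewrite -{2}hQ /Q QE3 !ctmx_mul ctmxK ctmx_dmx.
    rewrite -!mulmxA (mulmxA (ctmx W)) Wu mul1mx !mulmxA -(mulmxA U) dmx_mulmx.
    by congr (_ *m _ *m _); congr dmx; apply: funext => i; rewrite expr2.
  rewrite Na xa -!mulmxA ip_mulr !mulmxA Uu mul1mx -(mulmxA (dmx _)) Uu mulmx1.
  rewrite Re_ip_dmx /nr mulr_sumr; apply: ler_sum => j _.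
  case: (ltnP r j) => hj; first by rewrite asupp // nc0 !mulr0.
  apply: ler_wpM2r; first exact: nc_ge0.
  rewrite ler_sqr ?nnegrE //; exact: smono.
have I2b : nr (Qs *m x) <= lam r ^+ 2 * nr x.
  rewrite Nb xb QE -!mulmxA (mulmxA P) PP mul1mx nr_unitary'; last exact: PP'.
  rewrite nrE ip_mulr ctmx_dmx mulmxA dmx_mulmx Re_ip_dmx /nr mulr_sumr.
  apply: ler_sum => j _.
  case: (boolP (j \in I2)) => hj; last by rewrite bsupp // nc0 !mulr0.
  apply: ler_wpM2r; first exact: nc_ge0.
  rewrite -expr2 ler_sqr ?nnegrE //; move: hj; rewrite inE //.
have I3 := hHb x.
have I4 : nr (Q *m x) <= 2 * nr (Qs *m x) + 2 * nr (H *m x) by rewrite mulmxDl nr_par.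
have hs2 : s ro ^+ 2 <= 2 * lam r ^+ 2 + 2 * h ^+ 2.
  have : s ro ^+ 2 * nr x <= (2 * lam r ^+ 2 + 2 * h ^+ 2) * nr x by nra.
  by rewrite ler_pM2r.
have := s0 ro; nra.
Qed.

End Weyl2.
Section Final.
Variable R : realType.
Local Notation C := R[i].
Local Notation Re := (@complex.Re R).

Lemma Re_le (x y : C) : x <= y -> Re x <= Re y.
Proof. by rewrite lecE => /andP[]. Qed.

Lemma Re_ge0 (x : C) : 0 <= x -> 0 <= Re x.
Proof. exact: Re_le. Qed.

Lemma normC_real (x : R) : `|x%:C| = `|x|%:C.
Proof. by rewrite normc_def /= expr0n addr0 sqrtr_sqr. Qed.

Lemma herm_real n (A : 'M[C]_n) (z : 'cV[C]_n) : ctmx A = A ->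
  quadf A z = (Re (quadf A z))%:C.
Proof.
move=> hA; rewrite quadf_ip.
have e : conjc (ip z (A *m z)) = ip z (A *m z) by rewrite ip_conj ip_mulr hA.
move: e; case: (ip z (A *m z)) => a b /= /eqP; rewrite eq_complex /= => /andP[_ /eqP hb].
have -> : b = 0 by lra.
by [].
Qed.

Lemma nr_AK K n (z : 'cV[C]_n) : inAKn K z -> nr z = n%:R.
Proof.
move=> hz; rewrite /nr (eq_bigr (fun _ => 1)) ?sumr_const ?card_ord //.
move=> i _; have [k ->] := hz i; rewrite /nc /=; exact: cos2Dsin2.
Qed.

Lemma trunc_svdE n (U : 'M[C]_n) (s : 'I_n -> R) (r : nat) :
  trunc_svd U s r = U *m dmx (fun i => if (i < r)%N then s i else 0) *m ctmx U.
Proof.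
apply/matrixP => k l; rewrite /trunc_svd summxE [RHS]mxE.
rewrite [RHS](bigID (fun i : 'I_n => (i < r)%N)) /= [X in _ = _ + X]big1 ?addr0.
  apply: eq_bigr => i hi; rewrite mx_dmx_mul hi [LHS]mxE [X in _ * X = _]mxE big_ord1 !mxE.
  by rewrite mulrCA mulrA.
by move=> i hi; rewrite mx_dmx_mul (negbTE hi) mulr0 mul0r.
Qed.

Lemma svd_QQ n (Q U W : 'M[C]_n) (s : 'I_n -> R) : is_svd Q U s W -> ctmx Q = Q ->
  Q *m Q = U *m dmx (fun i => s i ^+ 2) *m ctmx U.
Proof.
move=> [Uu [Wu [s0 [smono QE2]]]] hQ.
have QE3 : Q = U *m dmx s *m ctmx W := QE2.
rewrite -{2}hQ QE3 !ctmx_mul ctmxK ctmx_dmx.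
rewrite -!mulmxA (mulmxA (ctmx W)) Wu mul1mx !mulmxA -(mulmxA U) dmx_mulmx.
by congr (_ *m _ *m _); congr dmx; apply: funext => i; rewrite expr2.
Qed.

End Final.
Theorem corollary5 (R : realType) :
  exists c : R, 0 < c /\
  forall (n K r : nat) (Qs H : 'M[R[i]]_n) (lam : nat -> R)
         (U W : 'M[R[i]]_n) (s : 'I_n -> R) (zopt zr : 'cV[R[i]]_n),
    (2 <= K)%N ->
    is_psd Qs ->
    is_hermitian H ->
    eigen_seq Qs lam ->
    (r <= \rank Qs)%N ->
    is_svd (Qs + H) U s W ->
    inAKn K zopt -> (forall z, inAKn K z -> quadf Qs z <= quadf Qs zopt) ->
    inAKn K zr ->
    (forall z, inAKn K z -> quadf (trunc_svd U s r) z <= quadf (trunc_svd U s r) zr) ->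
    `| quadf Qs zopt - quadf Qs zr | <= (c * n%:R * (lam r + specnorm H))%:C.
Proof.
exists 10; split; first lra.
move=> n K r Qs H lam U W s zopt zr K2 psd hH es rk svd hzo opt hzr optr.
case: (posnP n) => [n0|n0].
  subst n.
  have q0 : forall (A : 'M[R[i]]_0) z, quadf A z = 0 by move=> A z; rewrite /quadf mxE big_ord0.
  by rewrite !q0 subrr normr0 mulr0 mul0r.
have [h0 hb] := specnorm_prop H n0.
set h := specnorm H in h0 hb *.
have hQ : ctmx (Qs + H) = Qs + H by rewrite ctmxD hH (proj1 psd).
have svd' := svd.
move: svd' => [Uu [Wu [s0 [smono QE2]]]].
have UU := unitary_r Uu.
have [lam0 sB] : 0 <= lam r /\ forall i : 'I_n, (r <= i)%N -> s i <= 2 * (lam r + h).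
  case: (ltnP r n) => rn; first exact: (weyl psd es hH h0 hb svd rn).
  have [_ [_ l0]] := es; split; first by rewrite l0.
  by move=> i hi; exfalso; have := ltn_ord i; lia.
set T := ctmx U *m (Qs + H) *m U.
have hT : ctmx T = T by rewrite /T !ctmx_mul ctmxK hQ mulmxA.
have TT : T *m T = dmx (fun i => s i ^+ 2).
  rewrite /T -!mulmxA (mulmxA U) UU mul1mx !mulmxA -(mulmxA _ (Qs + H) (Qs + H)).
  rewrite (svd_QQ svd hQ) !mulmxA Uu mul1mx -mulmxA Uu mulmx1.
  by [].
have hpos : forall w, - h * nr w <= complex.Re (ip w (T *m w)).
  move=> w; rewrite /T -!mulmxA -ip_mulr mulmxDl ipDr ReD.
  have p1 : 0 <= complex.Re (ip (U *m w) (Qs *m (U *m w))).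
    by apply: Re_ge0; rewrite -quadf_ip; exact: (proj2 psd).
  have p2 := ip_bound h0 (hb (U *m w)).
  rewrite nr_unitary // in p2.
  move: p2; rewrite ler_norml => /andP[p2 p3]; lra.
have KK := key s0 h0 hT TT hpos.
pose sr := fun i : 'I_n => if (i < r)%N then s i else 0.
have Dz : forall z, inAKn K z ->
   - (3 * h * n%:R) <= complex.Re (quadf Qs z) - complex.Re (quadf (trunc_svd U s r) z)
   <= (3 * h + 2 * (lam r + h)) * n%:R.
  move=> z hz; have Nz := nr_AK hz.
  set a := ctmx U *m z.
  have za : z = U *m a by rewrite /a mulmxA UU mul1mx.
  have Na : nr a = n%:R by rewrite /a nr_unitary'.
  have e1 : complex.Re (quadf Qs z) = complex.Re (ip a (T *m a)) - complex.Re (ip z (H *m z)).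
    rewrite quadf_ip.
    have -> : Qs *m z = (Qs + H) *m z - H *m z by rewrite mulmxDl addrK.
    rewrite ipBr ReB; congr (_ - _).
    have -> : ip z ((Qs + H) *m z) = ip a (T *m a) by rewrite {1 2}za ip_mulr /T !mulmxA.
    by [].
  have e2 : complex.Re (quadf (trunc_svd U s r) z) = complex.Re (ip a (dmx sr *m a)).
    rewrite quadf_ip trunc_svdE {1 2}za ip_mulr !mulmxA Uu mul1mx -(mulmxA _ (ctmx U) U) Uu mulmx1.
    by [].
  have e3 : complex.Re (ip a (T *m a)) =
      complex.Re (ip a (dmx s *m a)) - complex.Re (ip a ((dmx s - T) *m a)).
    by rewrite mulmxBl ipBr ReB opprB addrC subrK.
  have e4 : 0 <= complex.Re (ip a (dmx s *m a)) - complex.Re (ip a (dmx sr *m a))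
            <= 2 * (lam r + h) * nr a.
    rewrite !Re_ip_dmx -sumrB /nr mulr_sumr; apply/andP; split.
      apply: sumr_ge0 => i _; rewrite /sr; case: ifP => _; first by rewrite subrr.
      by rewrite mul0r subr0; apply: mulr_ge0 => //; exact: nc_ge0.
    apply: ler_sum => i _; rewrite /sr; case: ifP => hi.
      by rewrite subrr; apply: mulr_ge0; [lra | exact: nc_ge0].
    rewrite mul0r subr0; apply: ler_wpM2r; first exact: nc_ge0.
    by apply: sB; rewrite leqNgt hi.
  have e5 := KK a.
  have e6 := ip_bound h0 (hb z).
  move: e5 e6; rewrite !ler_norml => /andP[e5 e5'] /andP[e6 e6'].
  move/andP: e4 => [e4 e4'].
  rewrite e1 e2 e3; rewrite Na in e5 e5' e4'; rewrite Nz in e6 e6'.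
  apply/andP; split; lra.
have /andP[d1l d1u] := Dz zopt hzo.
have /andP[d2l d2u] := Dz zr hzr.
have o1 := Re_le (opt zr hzr).
have o2 := Re_le (optr zopt hzo).
rewrite (herm_real zopt (proj1 psd)) (herm_real zr (proj1 psd)) -rmorphB /= normC_real lecR.
have N0 : 0 <= (n%:R : R) by apply: ler0n.
rewrite ger0_norm; last lra.
nra.
Qed.
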